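(* The power series $[\sqrt2]_q$, $[\sqrt3]_q$, $[\sqrt5]_q$, $[\sqrt7]_q\in\mathbb{Z}[[q]]$ satisfy $$\begin{aligned} q^2[\sqrt2]_q^2-(q^3-1)[\sqrt2]_q&=q^2+1,\\ q^2[\sqrt3]_q^2-(q^3+q^2-q-1)[\sqrt3]_q&=q^2+q+1,\\ q^3[\sqrt5]_q^2-(q^5+q^3-q^2-1)[\sqrt5]_q&=q^4+q^3+q^2+q+1,\\ q^3[\sqrt7]_q^2-(q^5+q^4-q-1)[\sqrt7]_q&=q^4+2q^3+q^2+2q+1. \end{aligned}$$
   Context: For an integer $a\geq1$ put $[a]_q=1+q+\cdots+q^{a-1}$ and $[a]_{q^{-1}}=1+q^{-1}+\cdots+q^{-(a-1)}$. Every rational number $r/s>1$ has a unique even-length regular continued fraction $r/s=[a_1,\ldots,a_{2m}]$ with $a_i\in\mathbb{Z}_{\geq1}$. Its $q$-deformation is the rational function $$\left[\tfrac{r}{s}\right]_q=[a_1]_q+\cfrac{q^{a_1}}{[a_2]_{q^{-1}}+\cfrac{q^{-a_2}}{[a_3]_q+\cfrac{q^{a_3}}{\ddots+\cfrac{q^{a_{2m-1}}}{[a_{2m}]_{q^{-1}}}}}}.$$ One also sets $[1]_q=1$. Each $[r/s]_q$ is identified with its Taylor expansion at $q=0$. For an irrational real number $x>1$ with continued fraction $x=[a_1,a_2,\ldots]$ and convergents $x_n=[a_1,\ldots,a_n]$, define $$[x]_q:=\sum_{k\geq0}\varkappa_kq^k,\qquad \varkappa_k=\lim_{n\to\infty}\bigl(\text{coefficient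 of }q^k\text{ in }[x_n]_q\bigr).$$ These limits exist and are eventually attained. The continued fractions are $\sqrt2=[1,\overline{2}]$, $\sqrt3=[1,\overline{1,2}]$, $\sqrt5=[2,\overline{4}]$ and $\sqrt7=[2,\overline{1,1,1,4}]$, where the bar denotes the periodically repeated block. *)

(* Defs.v *)
From HB Require Import structures.
From mathcomp Require Import all_boot all_order all_algebra.
From mathcomp Require Import fraction.
Set Implicit Arguments. Unset Strict Implicit. Unset Printing Implicit Defensive.
Import Order.TTheory GRing.Theory Num.Theory.
Local Open Scope ring_scope.

Notation ratfun := {fraction {poly int}}.
Definition qvar : ratfun := FracField.tofrac 'X.
Definition polyF (p : {poly int}) : ratfun := FracField.tofrac p.

Definition qint (a : nat) : ratfun := \sum_(i < a) qvar ^+ i.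
Definition qintinv (a : nat) : ratfun := \sum_(i < a) qvar ^- i.

(* The q-continued fraction; b = true means the current entry uses [_]_q
   and numerator q^{a}, b = false means [_]_{q^{-1}} and q^{-a}. *)
Fixpoint qcf_aux (b : bool) (l : seq nat) : ratfun :=
  match l with
  | [::] => 0
  | [:: a] => if b then qint a else qintinv a
  | a :: l' =>
      if b then qint a + qvar ^+ a / qcf_aux (~~ b) l'
      else qintinv a + qvar ^- a / qcf_aux (~~ b) l'
  end.

(* Turn a regular continued fraction [a_1,...,a_n] (a_i >= 1) of a rational
   number > 1 into its (unique) even-length form. *)
Definition evenize (l : seq nat) : seq nat :=
  if odd (size l) then
    match rev l with
    | 1%N :: b :: r => rev (b.+1 :: r)
    | a :: r => rev (1%N :: a.-1 :: r)
    | [::] => [::]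
    end
  else l.

(* [r/s]_q for r/s = [a_1,...,a_n]; with the convention [1]_q = 1. *)
Definition qrat (l : seq nat) : ratfun :=
  if l == [:: 1%N] then 1 else qcf_aux true (evenize l).

Definition pser := nat -> int.
Definition psmul (f g : pser) : pser :=
  fun k => \sum_(i < k.+1) f i * g (k - i)%N.
Definition pspoly (p : {poly int}) : pser := fun k => p`_k.

Definition taylor (F : ratfun) (f : pser) : Prop :=
  exists N D : {poly int},
    D`_0 != 0 /\ F = polyF N / polyF D /\
    forall k, psmul (pspoly D) f k = N`_k.

(* [x]_q for an irrational x > 1 with partial quotients a 0, a 1, ...
   (a 0 = a_1 in the paper's numbering): every coefficient kappa_k is the
   eventual value of the coefficient of q^k in [x_n]_q. *)
Definition qirr (a : nat -> nat) (f : pser) : Prop :=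
  forall k, exists M : nat, forall n : nat, (M <= n)%N ->
    exists g, taylor (qrat (mkseq a n.+1)) g /\ g k = f k.

Definition cf_sqrt2 (n : nat) : nat := if n == 0%N then 1%N else 2%N.
Definition cf_sqrt3 (n : nat) : nat :=
  if n == 0%N then 1%N else if odd n then 1%N else 2%N.
Definition cf_sqrt5 (n : nat) : nat := if n == 0%N then 2%N else 4%N.
Definition cf_sqrt7 (n : nat) : nat :=
  if n == 0%N then 2%N else if (n %% 4 == 0)%N then 4%N else 1%N.

Definition quad_rel (A B C : {poly int}) (f : pser) : Prop :=
  forall k, psmul (pspoly A) (psmul f f) k + psmul (pspoly B) f k = C`_k.

(* Main.v *)
Require Import Defs.
From HB Require Import structures.
From mathcomp Require Import all_boot all_order all_algebra.
From mathcomp Require Import fraction ring lra zify.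
Import Order.TTheory GRing.Theory Num.Theory.
Local Open Scope ring_scope.

Definition qp (a : nat) : {poly int} := \sum_(i < a) 'X^i.
Definition stepv (b : bool) (a : nat) (v : {poly int} * {poly int}) :=
  if b then (qp a * v.1 + 'X^a * v.2, v.1)
  else ('X * qp a * v.1 + v.2, 'X^a * v.1).
Fixpoint vec (b : bool) (l : seq nat) : {poly int} * {poly int} :=
  match l with
  | [::] => (0, 1)
  | [:: a] => if b then (qp a, 1) else (qp a, 'X^(a.-1))
  | a :: l' => stepv b a (vec (~~ b) l')
  end.

Lemma vec_cons b a l : l != [::] -> vec b (a :: l) = stepv b a (vec (~~ b) l).
Proof. by case: l. Qed.

Lemma qpS a : qp a.+1 = 1 + 'X * qp a.
Proof.
rewrite /qp big_ord_recl expr0 mulr_sumr; congr (_ + _).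
by apply: eq_bigr => i _; rewrite /= exprS.
Qed.

Lemma qp_h1 a : (qp a).[1] = a%:R.
Proof.
elim: a => [|a IH]; first by rewrite /qp big_ord0 horner0.
by rewrite qpS hornerD hornerM hornerX IH hornerC mul1r -natr1 addrC.
Qed.

Lemma qp_c0 a : (0 < a)%N -> (qp a)`_0 = 1.
Proof. by case: a => // a _; rewrite qpS coefD coefXM coefC. Qed.

Lemma qvar_neq0 : qvar != 0.
Proof. by rewrite /qvar tofrac_eq0 polyX_eq0. Qed.

Lemma polyF_qp a : polyF (qp a) = qint a.
Proof.
rewrite /polyF /qp /qint rmorph_sum; apply: eq_bigr => i _.
by rewrite rmorphXn.
Qed.

Lemma qintinvE a : qintinv a.+1 = qint a.+1 / qvar ^+ a.
Proof.
apply: (@mulIf _ (qvar ^+ a)); first by rewrite expf_neq0 // qvar_neq0.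
rewrite divfK ?expf_neq0 ?qvar_neq0 // /qintinv /qint mulr_suml.
rewrite (reindex_inj rev_ord_inj) /=; apply: eq_bigr => i _.
have hi : (i <= a)%N by rewrite -ltnS.
rewrite subSS.
have -> : qvar ^+ a = qvar ^+ (a - i) * qvar ^+ i by rewrite -exprD subnK.
by rewrite mulrA mulVf ?mul1r // expf_neq0 // qvar_neq0.
Qed.

Lemma stepv_pos b a v : (0 < a)%N -> 0 < v.1.[1] -> 0 < v.2.[1] ->
  0 < (stepv b a v).1.[1] /\ 0 < (stepv b a v).2.[1].
Proof.
case: v => n d ha /= h1 h2.
have qa : 0 < (qp a).[1] by rewrite qp_h1 ltr0n.
case: b; rewrite /stepv /=; split => //.
- by rewrite hornerD !hornerM hornerXn expr1n mul1r addr_gt0 // mulr_gt0.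
- by rewrite hornerD !hornerM hornerX mul1r addr_gt0 // mulr_gt0.
- by rewrite hornerM hornerXn expr1n mul1r.
Qed.

Lemma vec_pos b l : l != [::] -> all (leq 1) l ->
  0 < (vec b l).1.[1] /\ 0 < (vec b l).2.[1].
Proof.
elim: l b => // a l IH b _ /andP[ha hl].
case: l IH hl => [|c l] IH hl.
  have qa : 0 < (qp a).[1] by rewrite qp_h1 ltr0n.
  by case: b => /=; split => //; rewrite ?hornerC ?hornerXn ?expr1n.
have [h1 h2] := IH (~~ b) isT hl.
by rewrite vec_cons //; apply: stepv_pos.
Qed.

Lemma vec_neq0 b l : l != [::] -> all (leq 1) l ->
  (vec b l).1 != 0 /\ (vec b l).2 != 0.
Proof.
move=> h1 h2; have [p1 p2] := vec_pos b l h1 h2.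
by split; apply/eqP => e; [move: p1|move: p2]; rewrite e horner0 ltxx.
Qed.

Lemma polyFD p q : polyF (p + q) = polyF p + polyF q.
Proof. exact: rmorphD. Qed.
Lemma polyFM p q : polyF (p * q) = polyF p * polyF q.
Proof. exact: rmorphM. Qed.
Lemma polyFXn n : polyF ('X^n) = qvar ^+ n.
Proof. exact: rmorphXn. Qed.
Lemma polyFX : polyF 'X = qvar.
Proof. by []. Qed.
Lemma polyF1 : polyF 1 = 1.
Proof. exact: rmorph1. Qed.

Lemma qcf_cons b a l : l != [::] -> qcf_aux b (a :: l) =
  if b then qint a + qvar ^+ a / qcf_aux (~~ b) l
  else qintinv a + qvar ^- a / qcf_aux (~~ b) l.
Proof. by case: l => [//|c l] _. Qed.

Lemma aux1 (F : fieldType) (A q d n : F) k : n != 0 ->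
  A + q ^+ k / (n / d) = (A * n + q ^+ k * d) / n.
Proof. by move=> hn; rewrite invf_div; field. Qed.

Lemma aux2 (F : fieldType) (A q d n : F) k : q != 0 -> n != 0 ->
  A / q ^+ k + q ^- k.+1 / (n / d) = (q * A * n + d) / (q ^+ k.+1 * n).
Proof. move=> hq hn; rewrite invf_div exprS; field. by rewrite hn hq expf_neq0. Qed.

Lemma vec_val b l : l != [::] -> all (leq 1) l ->
  qcf_aux b l = polyF (vec b l).1 / polyF (vec b l).2.
Proof.
elim: l b => [b|a l IH b _ /andP[ha hl]]; first by rewrite eqxx.
case: a ha => [//|a] _.
case: l IH hl => [|c l] IH hl.
  case: b => /=; first by rewrite polyF1 divr1 polyF_qp.
  by rewrite qintinvE polyF_qp polyFXn.
rewrite (qcf_cons b a.+1 (c :: l) isT) (vec_cons b a.+1 (c :: l) isT) (IH _ isT hl).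
have [n0 d0] := vec_neq0 (~~ b) (c :: l) isT hl.
move: n0 d0; case: (vec (~~ b) (c :: l)) => n d n0 d0.
have nF : polyF n != 0 by rewrite /polyF tofrac_eq0.
have dF : polyF d != 0 by rewrite /polyF tofrac_eq0.
have qa : qvar ^+ a != 0 := expf_neq0 _ qvar_neq0.
have qn : qvar != 0 := qvar_neq0.
case: b; rewrite /stepv /= !polyFD !polyFM !polyFXn ?polyFX polyF_qp.
  exact: (@aux1 _ (qint a.+1) qvar (polyF d) (polyF n) a.+1 nF).
rewrite qintinvE.
exact: (@aux2 _ (qint a.+1) qvar (polyF d) (polyF n) a qvar_neq0 nF).
Qed.

Lemma vec_c0 b l : l != [::] -> all (leq 1) l -> odd (size l) = ~~ b ->
  (if b then (vec b l).2 else (vec b l).1)`_0 = 1.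
Proof.
elim: l b => [b|a l IH b _ /andP[ha hl]]; first by rewrite eqxx.
case: l IH hl => [|c l] IH hl.
  by case: b => //= _; rewrite qp_c0.
rewrite (vec_cons b a (c :: l) isT) => hs.
have hs' : odd (size (c :: l)) = ~~ ~~ b.
  by move: hs => /=; case: b; case: (odd (size l)).
have := IH (~~ b) isT hl hs'.
case: (vec (~~ b) (c :: l)) => n d.
case: b {hs hs'} => /= h.
  by [].
by rewrite -mulrA coefD coefXM /= add0r.
Qed.

Definition etail (k : nat) (t : seq nat) : seq nat :=
  if odd k then
    match rev t with
    | 1%N :: b :: r => rev (b.+1 :: r)
    | a :: r => rev (1%N :: a.-1 :: r)
    | [::] => [::]
    end
  else t.

Lemma evenizeE l : evenize l = etail (size l) l.
Proof. by []. Qed.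

Lemma etail_cat k s t : (1 < size t)%N -> etail k (s ++ t) = s ++ etail k t.
Proof.
move=> ht; rewrite /etail; case: (odd k) => //.
rewrite rev_cat; move: ht; rewrite -size_rev.
have E x : rev (x ++ rev s) = s ++ rev x by rewrite rev_cat revK.
case: (rev t) => [|c [|d r]] //= _.
case: c => [|[|c]].
- exact: (E [:: 1%N, 0%N, d & r]).
- exact: (E [:: d.+1 & r]).
- exact: (E [:: 1%N, c.+1, d & r]).
Qed.

Lemma etail_all k t : (1 < size t)%N -> all (leq 1) t -> all (leq 1) (etail k t).
Proof.
move=> ht; rewrite /etail; case: (odd k) => //.
rewrite -all_rev; move: ht; rewrite -size_rev.
case: (rev t) => [|c [|d r]] //= _.
case: c => [|[|c]] /=; rewrite all_rev /= //.
all: by case/andP => h1 h2; rewrite ?h1 ?h2.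
Qed.

Fixpoint vapp (b : bool) (l : seq nat) u :=
  match l with [::] => u | x :: l' => stepv b x (vapp (~~ b) l' u) end.

Lemma vec_cat b l t : t != [::] ->
  vec b (l ++ t) = vapp b l (vec (odd (size l) (+) b) t).
Proof.
move=> ht; elim: l b => [|x l IH] b; first by [].
have hlt : l ++ t != [::] by case: l {IH} => //.
rewrite cat_cons (vec_cons b x (l ++ t) hlt) IH /=.
by rewrite addNb addbN.
Qed.

Lemma mkseqS0 (f : nat -> nat) m :
  mkseq f m.+1 = f 0%N :: mkseq (fun i => f i.+1) m.
Proof.
rewrite /mkseq /=; have := iotaDl 1 0 m; rewrite addn0 => ->.
by rewrite -map_comp.
Qed.

Lemma mkseqD (g : nat -> nat) p n :
  mkseq g (p + n) = mkseq g p ++ mkseq (fun i => g (p + i)%N) n.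
Proof.
rewrite /mkseq iotaD map_cat add0n; have := iotaDl p 0 n; rewrite addn0 => ->.
by rewrite -map_comp.
Qed.

Definition eqm k (p q : {poly int}) := forall i, (i <= k)%N -> p`_i = q`_i.
Definition tr k (g : pser) : {poly int} := \poly_(i < k.+1) g i.

Lemma eqm_refl k p : eqm k p p. Proof. by []. Qed.
Lemma eqm_sym k p q : eqm k p q -> eqm k q p.
Proof. by move=> h i hi; rewrite h. Qed.
Lemma eqm_trans k p q r : eqm k p q -> eqm k q r -> eqm k p r.
Proof. by move=> h1 h2 i hi; rewrite h1 ?h2. Qed.
Lemma eqm_add k p p' q q' : eqm k p p' -> eqm k q q' -> eqm k (p + q) (p' + q').
Proof. by move=> h1 h2 i hi; rewrite !coefD h1 ?h2. Qed.
Lemma eqm_sub k p p' q q' : eqm k p p' -> eqm k q q' -> eqm k (p - q) (p' - q').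
Proof. by move=> h1 h2 i hi; rewrite !coefB h1 ?h2. Qed.
Lemma eqm_mul k p p' q q' : eqm k p p' -> eqm k q q' -> eqm k (p * q) (p' * q').
Proof.
move=> hp hq i hi; rewrite !coefM; apply: eq_bigr => j _.
have hj : (j <= k)%N := leq_trans (ltnSE (ltn_ord j)) hi.
by rewrite hp // hq // (leq_trans (leq_subr _ _) hi).
Qed.

Arguments eqm_refl {k p}.
Arguments eqm_sym {k p q}.
Arguments eqm_trans {k p q r}.
Arguments eqm_add {k p p' q q'}.
Arguments eqm_sub {k p p' q q'}.
Arguments eqm_mul {k p p' q q'}.

Lemma psmul_tr P g k j : (j <= k)%N -> psmul (pspoly P) g j = (P * tr k g)`_j.
Proof.
move=> hj; rewrite coefM /psmul; apply: eq_bigr => i _.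
by rewrite coef_poly /pspoly ltnS (leq_trans (leq_subr _ _) hj).
Qed.

Lemma tr_psmul g h k : eqm k (tr k (psmul g h)) (tr k g * tr k h).
Proof.
move=> i hi; rewrite coefM coef_poly ltnS hi /psmul; apply: eq_bigr => j _.
have hj : (j <= k)%N := leq_trans (ltnSE (ltn_ord j)) hi.
by rewrite !coef_poly !ltnS hj (leq_trans (leq_subr _ _) hi).
Qed.

Lemma eqm_cancel k (c p q : {poly int}) : c`_0 != 0 -> eqm k (c * p) (c * q) -> eqm k p q.
Proof.
move=> c0 h.
suff H : forall i, (i <= k)%N -> (p - q)`_i = 0.
  by move=> i hi; apply/eqP; rewrite -subr_eq0 -coefB H.
elim/ltn_ind => i IH hi.
have e : (c * (p - q))`_i = 0 by rewrite mulrBr coefB h // subrr.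
move: e; rewrite coefM big_ord_recl big1 ?addr0.
  by move/eqP; rewrite mulf_eq0 (negbTE c0) subn0 => /eqP.
move=> j _; rewrite IH ?mulr0 //=.
- by case: i {IH hi} j => [[]|i j] //=; rewrite subSS ltnS leq_subr.
- by apply: leq_trans hi; apply: leq_subr.
Qed.

Definition Qf (A B C : {poly int}) (v : {poly int} * {poly int}) :=
  A * v.1 * v.1 + B * v.1 * v.2 - C * v.2 * v.2.
Definition vanish m (p : {poly int}) := forall i, (i < m)%N -> p`_i = 0.
Definition tl (a : nat -> nat) n := etail n.+1 (mkseq (fun i => a i.+1) n).

Lemma etail_odd k k' t : odd k = odd k' -> etail k t = etail k' t.
Proof. by rewrite /etail => ->. Qed.

Lemma qirr_fin a f : qirr a f -> forall k, exists M, forall j, (j <= k)%N ->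
  forall n, (M <= n)%N -> exists g, taylor (qrat (mkseq a n.+1)) g /\ g j = f j.
Proof.
move=> hq; elim => [|k [M IH]].
  have [M HM] := hq 0%N; exists M => j; rewrite leqn0 => /eqP -> //.
have [M' HM'] := hq k.+1; exists (maxn M M') => j hj n hn.
rewrite geq_max in hn; case/andP: hn => h1 h2.
move: hj; rewrite leq_eqVlt => /orP[/eqP ->|hj]; first exact: HM'.
exact: IH.
Qed.

Lemma main_gen (a : nat -> nat) (p c : nat) (A B C : {poly int}) (f : pser) :
  (forall i, a (p + i).+1 = a i.+1) -> ~~ odd p -> (0 < p)%N -> (0 < c)%N ->
  (0 < a 0)%N -> all (leq 1) (mkseq (fun i => a i.+1) p) ->
  odd (size (tl a 2)) && all (leq 1) (tl a 2) ->
  (forall u, Qf A B C (stepv true (a 0) (vapp false (mkseq (fun i => a i.+1) p) u))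
             = 'X^c * Qf A B C (stepv true (a 0) u)) ->
  qirr a f -> quad_rel A B C f.
Proof.
move=> Hper Hpe Hp0 Hc Ha0 HP Hbase HW hq k.
set P := mkseq (fun i => a i.+1) p.
have tl_shift n : (2 <= n)%N -> tl a (n + p) = P ++ tl a n.
  move=> hn; rewrite /tl addnC mkseqD.
  have -> : mkseq (fun i => a (p + i).+1) n = mkseq (fun i => a i.+1) n.
    by apply: eq_mkseq => i; rewrite Hper.
  rewrite etail_cat ?size_mkseq //; congr (_ ++ _); apply: etail_odd.
  by rewrite -addnS oddD (negbTE Hpe).
have good n : odd (size (tl a (2 + n * p))) && all (leq 1) (tl a (2 + n * p)).
  elim: n => [|n IH]; first by rewrite mul0n addn0.
  rewrite mulSn addnCA addnC tl_shift; last by lia.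
  rewrite size_cat oddD all_cat HP /= size_mkseq (negbTE Hpe) /=.
  exact: IH.
have Lst n : (2 <= n)%N -> qrat (mkseq a n.+1) = qcf_aux true (a 0 :: tl a n).
  move=> hn; rewrite /qrat ifF; last first.
    by apply/eqP => e; have := congr1 size e; rewrite size_mkseq /=; lia.
  by rewrite evenizeE size_mkseq mkseqS0 (etail_cat n.+1 [:: a 0]) ?size_mkseq.
have W_shift n : (2 <= n)%N -> tl a n != [::] ->
    Qf A B C (vec true (a 0 :: tl a (n + p))) =
    'X^c * Qf A B C (vec true (a 0 :: tl a n)).
  move=> hn ht; rewrite tl_shift //.
  have hPt : P ++ tl a n != [::].
    by apply: contra ht; rewrite -!size_eq0 size_cat addn_eq0 => /andP[_ ->].
  rewrite (vec_cons true (a 0) _ hPt) (vec_cons true (a 0) _ ht).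
  by rewrite vec_cat // size_mkseq (negbTE Hpe) addbF; apply: HW.
have nonempty j : tl a (2 + j * p) != [::].
  by have := good j; case: (tl a (2 + j * p)).
have van j : vanish j (Qf A B C (vec true (a 0 :: tl a (2 + j * p)))).
  elim: j => [|j IH] i hi //.
  have -> : (2 + j.+1 * p = (2 + j * p) + p)%N by rewrite mulSn; lia.
  have h2 : (2 <= 2 + j * p)%N by lia.
  rewrite (W_shift _ h2 (nonempty j)).
  rewrite coefXnM; case: ifP => // hic; apply: IH; move/negbT: hic; lia.
have [M HM] := qirr_fin a f hq k.
set n := (2 + (M + k.+1) * p)%N.
have hn2 : (2 <= n)%N by rewrite /n; lia.
have hnM : (M <= n)%N.
  rewrite /n; apply: leq_trans (leq_addl 2 _); apply: leq_trans (leq_pmulr _ Hp0).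
  exact: leq_addr.
have hgood := good (M + k.+1)%N; rewrite -/n in hgood.
case/andP: hgood => hodd hall.
have hne : tl a n != [::] by move: hodd; case: (tl a n).
have hall' : all (leq 1) (a 0 :: tl a n) by rewrite /= Ha0.
set v := vec true (a 0 :: tl a n).
have hval : qrat (mkseq a n.+1) = polyF v.1 / polyF v.2.
  by rewrite Lst // vec_val.
have hD0 : v.2`_0 = 1.
  have := vec_c0 true (a 0 :: tl a n) isT hall'; apply.
  by rewrite /= hodd.
have hD : v.2 != 0 by apply/eqP => e; move: hD0; rewrite e coef0.
have key g : taylor (qrat (mkseq a n.+1)) g -> eqm k (v.2 * tr k g) v.1.
  case=> N' [D' [hD'0 [hF hm]]].
  have hD' : D' != 0 by apply: contraNneq hD'0 => ->; rewrite coef0.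
  have e : v.1 * D' = N' * v.2.
    apply/eqP; rewrite -tofrac_eq -!/(polyF _) !polyFM.
    by rewrite -eqr_div ?tofrac_eq0 // -hval hF.
  have hm' : eqm k (D' * tr k g) N' by move=> i hi; rewrite -psmul_tr.
  apply: (eqm_cancel k D' _ _ hD'0).
  rewrite mulrCA mulrC [D' * v.1]mulrC e.
  by apply: eqm_mul => //; apply: eqm_refl.
have [g [hg hgk]] := HM k (leqnn k) n hnM.
have hfg : eqm k (tr k f) (tr k g).
  move=> j hj; rewrite !coef_poly ltnS hj.
  have [gj [hgj hgjj]] := HM j hj n hnM.
  rewrite -hgjj.
  have := eqm_cancel k v.2 _ _ _ (eqm_trans (key _ hgj) (eqm_sym (key _ hg))).
  rewrite hD0 oner_eq0 => /(_ isT j hj); rewrite !coef_poly ltnS hj; apply.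
have hDF : eqm k (v.2 * tr k f) v.1.
  apply: eqm_trans (key _ hg); apply: eqm_mul => //; exact: eqm_refl.
have hQ : eqm k (Qf A B C v) 0.
  move=> i hi; rewrite coef0; apply: (van (M + k.+1)%N); lia.
set F := tr k f.
have hrel : eqm k (A * (F * F) + B * F - C) 0.
  apply: (eqm_cancel k (v.2 * v.2)).
    by rewrite coefM big_ord1 hD0 mulr1 oner_eq0.
  rewrite mulr0.
  have -> : v.2 * v.2 * (A * (F * F) + B * F - C) =
     A * (v.2 * F) * (v.2 * F) + B * (v.2 * F) * v.2 - C * v.2 * v.2 by ring.
  apply: eqm_trans hQ; rewrite /Qf.
  apply: eqm_sub; last exact: eqm_refl.
  apply: eqm_add; apply: eqm_mul => //; try apply: eqm_mul => //;
    try apply: eqm_refl.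
have := hrel k (leqnn k).
rewrite coef0 coefB coefD => /eqP; rewrite subr_eq0 => /eqP <-.
rewrite (psmul_tr A (psmul f f) k k (leqnn k)) (psmul_tr B f k k (leqnn k)).
congr (_ + _); rewrite -/F.
have := eqm_mul (@eqm_refl k A) (tr_psmul f f k); apply => //.
Qed.

Lemma qp1 : qp 1 = 1.
Proof. by rewrite qpS /qp big_ord0 mulr0 addr0. Qed.
Lemma qp2 : qp 2 = 1 + 'X.
Proof. by rewrite qpS qp1 mulr1. Qed.
Lemma qp4 : qp 4 = 1 + 'X + 'X^2 + 'X^3.
Proof.
rewrite !qpS {1}/qp big_ord0.
have -> : ('X^3 : {poly int}) = 'X * ('X * 'X) by rewrite !exprS expr0 mulr1.
have -> : ('X^2 : {poly int}) = 'X * 'X by rewrite expr2.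
ring.
Qed.

Lemma case2 f : qirr cf_sqrt2 f -> quad_rel ('X^2) (- ('X^3 - 1)) ('X^2 + 1) f.
Proof.
apply: (main_gen cf_sqrt2 2 4) => //.
case=> n d; rewrite /= /stepv /Qf /= /cf_sqrt2 /= ?qp1 ?qp2 ?qp4; ring.
Qed.

Lemma case3 f : qirr cf_sqrt3 f ->
  quad_rel ('X^2) (- ('X^3 + 'X^2 - 'X - 1)) ('X^2 + 'X + 1) f.
Proof.
apply: (main_gen cf_sqrt3 2 3) => //.
  by move=> i; rewrite /cf_sqrt3 add2n /= negbK.
case=> n d; rewrite /= /stepv /Qf /= /cf_sqrt3 /= ?qp1 ?qp2 ?qp4; ring.
Qed.

Lemma case5 f : qirr cf_sqrt5 f ->
  quad_rel ('X^3) (- ('X^5 + 'X^3 - 'X^2 - 1))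
               ('X^4 + 'X^3 + 'X^2 + 'X + 1) f.
Proof.
apply: (main_gen cf_sqrt5 2 8) => //.
case=> n d; rewrite /= /stepv /Qf /= /cf_sqrt5 /= ?qp1 ?qp2 ?qp4; ring.
Qed.

Lemma case7 f : qirr cf_sqrt7 f ->
  quad_rel ('X^3) (- ('X^5 + 'X^4 - 'X - 1))
               ('X^4 + 2%:R *: 'X^3 + 'X^2 + 2%:R *: 'X + 1) f.
Proof.
apply: (main_gen cf_sqrt7 4 7) => //.
case=> n d; rewrite /= /stepv /Qf /= /cf_sqrt7 /= ?qp1 ?qp2 ?qp4.
rewrite -!mul_polyC; ring.
Qed.

Theorem proposition4p3 (f2 f3 f5 f7 : pser) :
  qirr cf_sqrt2 f2 -> qirr cf_sqrt3 f3 -> qirr cf_sqrt5 f5 -> qirr cf_sqrt7 f7 ->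
  [/\ quad_rel ('X^2) (- ('X^3 - 1)) ('X^2 + 1) f2,
      quad_rel ('X^2) (- ('X^3 + 'X^2 - 'X - 1)) ('X^2 + 'X + 1) f3,
      quad_rel ('X^3) (- ('X^5 + 'X^3 - 'X^2 - 1))
               ('X^4 + 'X^3 + 'X^2 + 'X + 1) f5
    & quad_rel ('X^3) (- ('X^5 + 'X^4 - 'X - 1))
               ('X^4 + 2%:R *: 'X^3 + 'X^2 + 2%:R *: 'X + 1) f7].
Proof.
move=> h2 h3 h5 h7; split.
- exact: case2.
- exact: case3.
- exact: case5.
- exact: case7.
Qed.
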